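(* Let $\mathbb{K}\in\{\mathbb{R},\mathbb{C}\}$, let $X$ be a linear space over $\mathbb{K}$, and let $\phi\colon X\times X\to\mathbb{K}$ be biadditive with $\phi(z_0,z_0)\neq 0$ for some $z_0\in X$. Suppose the equation $f(x+y)=f(x)f(y)-\phi(x,y)$ ($x,y\in X$) has at least one solution $f\colon X\to\mathbb{K}$. Then: (i) there exist $a\in\mathbb{K}\setminus\{0\}$ and a nonzero additive functional $F\colon X\to\mathbb{K}$ such that $\phi(x,y)=a^2F(x)F(y)$ for all $x,y\in X$; and (ii) the equation has exactly two solutions $f\colon X\to\mathbb{K}$, namely $f(x)=a\phi(x,z_0)+1$ and $f(x)=-a\phi(x,z_0)+1$, where $a\in\mathbb{K}$ is a constant with $a^2\phi(x,z_0)\phi(y,z_0)=\phi(x,y)$ for all $x,y\in X$ (so $a^2=1/\phi(z_0,z_0)$).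
   Context: A map $\phi\colon X\times X\to\mathbb{K}$ is biadditive if it is additive in each variable separately (no homogeneity assumed). A functional $F\colon X\to\mathbb{K}$ is additive if $F(x+y)=F(x)+F(y)$ for all $x,y$. *)

(* Defs.v *)
(* K ranges over {R, C} where R : realType and C := R[i]
   (complex numbers over R, from mathcomp-real-closed). *)
From HB Require Import structures.
From mathcomp Require Import all_boot all_order all_algebra.
From mathcomp Require Import reals.
From mathcomp.real_closed Require Import complex.
Set Implicit Arguments. Unset Strict Implicit. Unset Printing Implicit Defensive.
Import Order.TTheory GRing.Theory Num.Theory.
Local Open Scope ring_scope.

Definition biadditive (K : fieldType) (X : lmodType K) (phi : X -> X -> K) : Prop :=
  (forall x y z : X, phi (x + y) z = phi x z + phi y z) /\
  (forall x y z : X, phi x (y + z) = phi x y + phi x z).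

Definition additive_fun (K : fieldType) (X : lmodType K) (F : X -> K) : Prop :=
  forall x y : X, F (x + y) = F x + F y.

Definition solves (K : fieldType) (X : lmodType K) (phi : X -> X -> K) (f : X -> K) : Prop :=
  forall x y : X, f (x + y) = f x * f y - phi x y.

Definition thm_for (K : fieldType) : Prop :=
  forall (X : lmodType K) (phi : X -> X -> K) (z0 : X),
    biadditive phi ->
    phi z0 z0 != 0 ->
    (exists f : X -> K, solves phi f) ->
    (exists (a : K) (F : X -> K),
        a != 0 /\ additive_fun F /\ (exists x, F x != 0) /\
        (forall x y, phi x y = a ^+ 2 * F x * F y)) /\
    (exists a : K, forall x y, a ^+ 2 * phi x z0 * phi y z0 = phi x y) /\
    (forall a : K, (forall x y, a ^+ 2 * phi x z0 * phi y z0 = phi x y) ->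
       (fun x => a * phi x z0 + 1) <> (fun x => - a * phi x z0 + 1) /\
       (forall f : X -> K, solves phi f <->
          (f = (fun x => a * phi x z0 + 1) \/ f = (fun x => - a * phi x z0 + 1)))).

(* Main.v *)
Require Import Defs.
From mathcomp Require Import all_boot all_order all_algebra.
From mathcomp Require Import reals.
From mathcomp.real_closed Require Import complex.
From mathcomp Require Import ring.
From Stdlib Require Import FunctionalExtensionality.
Set Implicit Arguments. Unset Strict Implicit. Unset Printing Implicit Defensive.
Import Order.TTheory GRing.Theory Num.Theory.
Local Open Scope ring_scope.

Lemma lincombk (K : fieldType) (k a b c d : K) :
  a = b -> c - d = k * (a - b) -> c = d.
Proof. by move=> -> h; apply/eqP; rewrite -subr_eq0 h subrr mulr0. Qed.

Lemma sol_form (K : fieldType) (X : lmodType K) (phi : X -> X -> K) (z0 : X) f :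
  biadditive phi -> phi z0 z0 != 0 -> solves phi f ->
  exists c, (forall x, f x = c * phi x z0 + 1) /\ c ^+ 2 * phi z0 z0 = 1 /\
     (forall x y, phi x y = c ^+ 2 * phi x z0 * phi y z0).
Proof.
move=> [phiDl phiDr] hp0 hf.
have key : forall x y z, phi x y * (f z - 1) = phi y z * (f x - 1).
  move=> x y z.
  have E : f (x + y + z) = f (x + (y + z)) by rewrite addrA.
  move: E; rewrite hf hf phiDl hf hf phiDr => E.
  apply: (lincombk (k:=-1) E); ring.
have [c hc] : exists c, forall x, f x = c * phi x z0 + 1.
  exists ((f z0 - 1) / phi z0 z0) => x.
  have E := key x z0 z0.
  apply: (lincombk (k:=- (phi z0 z0)^-1) E); field; exact: hp0.
have hsol : forall x y, phi x y = c ^+ 2 * phi x z0 * phi y z0.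
  move=> x y; have E := hf x y; move: E; rewrite !hc phiDl => E.
  apply: (lincombk (k:=1) E); ring.
exists c; split => //; split => //.
apply: (mulIf hp0); rewrite mul1r; symmetry; exact: hsol.
Qed.

Lemma thm_gen (K : fieldType) (two : (2 : K) != 0) : thm_for K.
Proof.
move=> X phi z0 hb hp0 [f hf].
have [phiDl phiDr] := hb.
have [c [hc [hc2 hsol]]] := sol_form hb hp0 hf.
have cn0 : c != 0.
  apply/eqP => c0; move: hc2; rewrite c0 expr0n /= mul0r => /eqP.
  by rewrite eq_sym oner_eq0.
split.
  exists c, (fun x => phi x z0); split => //; split.
    by move=> x y; rewrite phiDl.
  by split; [exists z0 | exact: hsol].
split.
  by exists c; move=> x y; rewrite [RHS]hsol.
move=> a ha.
have ha2 : a ^+ 2 * phi z0 z0 = 1.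
  apply: (mulIf hp0); rewrite mul1r; exact: ha.
have an0 : a != 0.
  apply/eqP => a0; move: ha2; rewrite a0 expr0n /= mul0r => /eqP.
  by rewrite eq_sym oner_eq0.
split.
  move=> E; have E2 := congr1 (fun h => h z0) E; move: E2 => /= E2.
  have : 2 * (a * phi z0 z0) = 0 by apply: (lincombk (k:=1) E2); ring.
  by move/eqP; apply/negP; rewrite !mulf_neq0.
move=> g; split.
  move=> hg.
  have [b [hb' [hb2 _]]] := sol_form hb hp0 hg.
  have : (b - a) * (b + a) = 0.
    have E : b ^+ 2 * phi z0 z0 = a ^+ 2 * phi z0 z0 by rewrite hb2 ha2.
    have E' : b ^+ 2 = a ^+ 2 by apply: (mulIf hp0).
    by apply: (lincombk (k:=1) E'); ring.
  move/eqP; rewrite mulf_eq0 => /orP [|] /eqP h.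
    left; apply: functional_extensionality => x; rewrite hb'.
    by have -> : b = a by apply/eqP; rewrite -subr_eq0 h.
  right; apply: functional_extensionality => x; rewrite hb'.
  by have -> : b = - a by apply/eqP; rewrite -addr_eq0 h.
move=> [->|->] x y /=; rewrite phiDl -[phi x y]ha; ring.
Qed.

Theorem mainTheorem2 (R : realType) : thm_for R /\ thm_for R[i].
Proof. by split; apply: thm_gen; rewrite pnatr_eq0. Qed.
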